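(* Let $V$ be a finite-dimensional vector space with a linear (rational) action of an algebraic group $G$. Then a closed subvariety $X\subset V$ is $G$-symmetric if and only if it is stable under $\operatorname{End}_G(V)$, i.e. $\phi(X)\subset X$ for all $\phi\in\operatorname{End}_G(V)$.
   Context: $\Bbbk$ is algebraically closed of characteristic $0$. Vector fields on $V$ are identified with polynomial maps $\xi\colon V\to V$ ($\xi(v)\in V=T_vV$); such $\xi$ is $G$-invariant if $\xi(gv)=g\xi(v)$ for all $g\in G$, $v\in V$. A closed subvariety $X\subset V$ is $G$-symmetric if $\xi(x)\in T_xX$ for all $x\in X$ and all $G$-invariant vector fields $\xi$ on $V$. $\operatorname{End}_G(V)$ is the set of $G$-equivariant polynomial maps $V\to V$. *)

(* Defs.v *)
From HB Require Import structures.
From mathcomp Require Import all_boot all_order all_algebra.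
From mathcomp Require Import mpoly.
Set Implicit Arguments. Unset Strict Implicit. Unset Printing Implicit Defensive.
Import GRing.Theory.
Local Open Scope ring_scope.

Section Defs.
Variables (k : fieldType) (n : nat).

Definition coords (v : 'cV[k]_n) : 'I_n -> k := fun i => v i 0.

Definition zariski_closed (X : 'cV[k]_n -> Prop) : Prop :=
  exists S : {mpoly k[n]} -> Prop,
    forall v, X v <-> (forall p, S p -> p.@[coords v] = 0).

(* Polynomial maps V -> V (= polynomial vector fields on V). *)
Definition polynomial_map (f : 'cV[k]_n -> 'cV[k]_n) : Prop :=
  exists P : 'I_n -> {mpoly k[n]}, forall v i, f v i 0 = (P i).@[coords v].

(* A linear algebraic group acting on V: a Zariski-closed subgroup of GL_n(k),
   acting by matrix multiplication. *)
Definition closed_subgroup_GL (G : 'M[k]_n -> Prop) : Prop :=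
  [/\ (forall g, G g -> g \in unitmx),
      G 1%:M,
      (forall g h, G g -> G h -> G (g *m h)),
      (forall g, G g -> G (invmx g)) &
      exists S : {mpoly k[n * n]} -> Prop,
        forall g, G g <-> (g \in unitmx /\
          forall p, S p -> p.@[fun ij : 'I_(n * n) => mxvec g 0 ij] = 0)].

(* G-equivariant polynomial map (equivalently, G-invariant vector field). *)
Definition G_equivariant (G : 'M[k]_n -> Prop) (f : 'cV[k]_n -> 'cV[k]_n) :=
  polynomial_map f /\ forall g v, G g -> f (g *m v) = g *m f v.

Definition vanishing_ideal (X : 'cV[k]_n -> Prop) (p : {mpoly k[n]}) : Prop :=
  forall y, X y -> p.@[coords y] = 0.

Definition tangent_space (X : 'cV[k]_n -> Prop) (x w : 'cV[k]_n) : Prop :=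
  forall p, vanishing_ideal X p ->
    \sum_(i < n) (p^`M(i)).@[coords x] * w i 0 = 0.

Definition G_symmetric (G : 'M[k]_n -> Prop) (X : 'cV[k]_n -> Prop) : Prop :=
  forall xi, G_equivariant G xi -> forall x, X x -> tangent_space X x (xi x).

End Defs.

(* Main.v *)
Require Import Defs.
From HB Require Import structures.
From mathcomp Require Import all_boot all_order all_algebra.
From mathcomp Require Import mpoly.
Set Implicit Arguments. Unset Strict Implicit. Unset Printing Implicit Defensive.
Import GRing.Theory.
Local Open Scope ring_scope.

Section Aux.
Variables (k : closedFieldType) (n : nat).
Implicit Types (p q : {mpoly k[n]}) (y w : 'I_n -> k).

Definition Qp y w p : {poly k} :=
  mmap (@polyC k) (fun i => (y i)%:P + w i *: 'X) p.

Lemma QpD y w : {morph Qp y w : a b / a + b}.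
Proof. by move=> a b; rewrite /Qp mmapD. Qed.
Lemma QpB y w : {morph Qp y w : a b / a - b}.
Proof. by move=> a b; rewrite /Qp mmapB. Qed.
Lemma QpM y w : {morph Qp y w : a b / a * b}.
Proof. by move=> a b; rewrite /Qp rmorphM. Qed.
Lemma QpC y w c : Qp y w c%:MP = c%:P.
Proof. by rewrite /Qp mmapC. Qed.
Lemma QpX y w i : Qp y w 'X_i = (y i)%:P + w i *: 'X.
Proof. by rewrite /Qp mmapX mmap1U. Qed.
Lemma Qp_sum y w I (r : seq I) (F : I -> {mpoly k[n]}) :
  Qp y w (\sum_(i <- r) F i) = \sum_(i <- r) Qp y w (F i).
Proof. by rewrite /Qp raddf_sum. Qed.

Lemma Qp_horner y w p s : (Qp y w p).[s] = p.@[fun i => y i + s * w i].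
Proof.
rewrite /Qp /mmap horner_sum mevalE; apply: eq_bigr => m _.
rewrite hornerCM /mmap1 horner_prod; congr (_ * _); apply: eq_bigr => i _.
by rewrite horner_exp hornerD hornerC hornerZ hornerX mulrC.
Qed.

Lemma poly_ext (P1 P2 : {poly k}) : (forall s, P1.[s] = P2.[s]) -> P1 = P2.
Proof.
move=> h; apply/eqP; rewrite -subr_eq0; apply/negPn/negP => nz.
have : size ((P1 - P2) * 'X + 1%:P) != 1%N.
  by rewrite size_MXaddC (negbTE nz) /= eqSS size_poly_eq0.
move/closed_rootP => [a]; rewrite /root hornerMXaddC hornerD hornerN !h subrr.
by rewrite mul0r add0r oner_eq0.
Qed.

Definition Dw w p : {mpoly k[n]} := \sum_i (w i)%:MP * p^`M(i).

Lemma chain y w p : (Qp y w p)^`() = Qp y w (Dw w p).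
Proof.
pose P p := (Qp y w p)^`() = Qp y w (Dw w p).
have PD a b : P a -> P b -> P (a + b).
  rewrite /P /Dw => ha hb; rewrite QpD derivD ha hb -QpD.
  congr Qp; rewrite -big_split; apply: eq_bigr => i _ /=.
  by rewrite mderivD mulrDr.
have PM a b : P a -> P b -> P (a * b).
  rewrite /P /Dw => ha hb; rewrite QpM derivM ha hb -!QpM -QpD.
  congr Qp; rewrite mulr_suml mulr_sumr -big_split; apply: eq_bigr => i _ /=.
  by rewrite mderivM mulrDr !mulrA [a * _]mulrC.
have PC c : P c%:MP.
  rewrite /P /Dw QpC derivC big1 ?QpC // => i _.
  by rewrite mderivC mulr0.
have PX i : P 'X_i.
  rewrite /P /Dw QpX derivD derivC derivZ derivX add0r.
  rewrite (bigD1 i) //= big1 ?addr0.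
    have e0 : (U_(i) - U_(i) = 0)%MM by apply/mnmP => j; rewrite mnmBE mnm0E subnn.
    by rewrite mderivX e0 mnm1E eqxx mpolyX0 scale1r mulr1 QpC alg_polyC.
  move=> j nji; rewrite mderivX mnm1E eq_sym (negbTE nji) scale0r mulr0 //.
have PXe i e : P ('X_i ^+ e).
  elim: e => [|e IH]; first by rewrite expr0 -mpolyC1; apply: PC.
  by rewrite exprS; apply: PM.
have PXm m : P 'X_[m].
  rewrite mpolyXE_id; elim/big_ind: _ => //; first by rewrite -mpolyC1; apply: PC.
elim/mpolyind: p => [|c m p _ _ Hp]; first by rewrite -mpolyC0; apply: PC.
apply: PD => //; rewrite -mul_mpolyC; exact: PM.
Qed.

Lemma dir_deriv y w q :
  (Qp y w q)^`().[0] = \sum_i w i * (q^`M(i)).@[y].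
Proof.
rewrite chain Qp_horner (@meval_eq _ _ _ y); last by move=> i; rewrite mul0r addr0.
rewrite /Dw raddf_sum; apply: eq_bigr => i _ /=.
by rewrite mevalM mevalC.
Qed.

Definition fld := 'I_n -> {mpoly k[n]}.
Definition c0 : fld := fun _ => 0.

Fixpoint T (l : seq fld) p : {mpoly k[n]} :=
  if l is c :: l' then \sum_i c i * T l' (p^`M(i)) else p.

Definition D (e : fld) q : {mpoly k[n]} := \sum_i e i * q^`M(i).
Definition Df (e c : fld) : fld := fun j => D e (c j).
Definition cst (y : 'I_n -> k) (c : fld) : fld := fun i => ((c i).@[y])%:MP.

Lemma T_add l : {morph T l : a b / a + b}.
Proof.
elim: l => [//|c l IH] a b /=; rewrite -big_split; apply: eq_bigr => i _ /=.
by rewrite mderivD IH mulrDr.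
Qed.

Lemma T_sum l I (r : seq I) (F : I -> {mpoly k[n]}) :
  T l (\sum_(i <- r) F i) = \sum_(i <- r) T l (F i).
Proof.
elim: r => [|a r IH]; last by rewrite !big_cons T_add IH.
rewrite !big_nil; elim: l => [//|c l IHl] /=.
by rewrite big1 // => i _; rewrite mderiv0 IHl mulr0.
Qed.

Lemma T_mulC l c p : T l (c%:MP * p) = c%:MP * T l p.
Proof.
elim: l p => [//|e l IH] p /=; rewrite mulr_sumr; apply: eq_bigr => i _.
by rewrite mderiv_mulC IH mulrCA.
Qed.

Lemma derivn_T y w m p :
  (Qp y w p)^`(m) = Qp y w (T (nseq m (fun i => (w i)%:MP)) p).
Proof.
elim: m p => [|m IH] p; first by rewrite derivn0.
rewrite derivSn chain /= /Dw Qp_sum raddf_sum Qp_sum; apply: eq_bigr => i _ /=.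
by rewrite !QpM QpC -IH mul_polyC derivnZ mul_polyC.
Qed.

Lemma T_eval y l p : (T l p).@[y] = (T (map (cst y) l) p).@[y].
Proof.
elim: l p => [//|c l IH] p /=; rewrite !raddf_sum; apply: eq_bigr => i _ /=.
by rewrite !mevalM IH mevalC.
Qed.

Lemma T_swap a b l p : T [:: a, b & l] p = T [:: b, a & l] p.
Proof.
rewrite /=; under eq_bigr do rewrite mulr_sumr.
rewrite exchange_big; apply: eq_bigr => j _; rewrite mulr_sumr.
by apply: eq_bigr => i _; rewrite mulrCA mderiv_comm.
Qed.

Lemma D_add e : {morph D e : a b / a + b}.
Proof.
by move=> a b; rewrite /D -big_split; apply: eq_bigr => i _ /=; rewrite mderivD mulrDr.
Qed.

Lemma D_sum e I (r : seq I) (F : I -> {mpoly k[n]}) :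
  D e (\sum_(i <- r) F i) = \sum_(i <- r) D e (F i).
Proof.
elim: r => [|a r IH]; last by rewrite !big_cons D_add IH.
by rewrite !big_nil /D big1 // => i _; rewrite mderiv0 mulr0.
Qed.

Lemma D_mul e a b : D e (a * b) = D e a * b + a * D e b.
Proof.
rewrite /D mulr_suml mulr_sumr -big_split; apply: eq_bigr => i _ /=.
by rewrite mderivM mulrDr !mulrA [a * _]mulrC.
Qed.

Fixpoint R (e : fld) (l : seq fld) p : {mpoly k[n]} :=
  if l is c :: l' then T (Df e c :: l') p + \sum_i c i * R e l' (p^`M(i))
  else 0.

Lemma D_T e l p : D e (T l p) = T (e :: l) p + R e l p.
Proof.
elim: l p => [|c l IH] p; first by rewrite /= addr0.
rewrite T_swap /= D_sum.

rewrite (eq_bigr (fun i => D e (c i) * T l (p^`M(i)) +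
   c i * (T (e :: l) (p^`M(i)) + R e l (p^`M(i))))); last first.
  by move=> i _; rewrite D_mul IH.
rewrite big_split /= addrCA; congr (_ + _).
rewrite (eq_bigr (fun i => c i * T (e :: l) (p^`M(i)) + c i * R e l (p^`M(i)))); last first.
  by move=> i _; rewrite mulrDr.
by rewrite big_split.
Qed.

Lemma R_rep e l p :
  R e l p = \sum_(j < size l) T (set_nth c0 l j (Df e (nth c0 l j))) p.
Proof.
elim: l p => [|c l IH] p /=; first by rewrite big_ord0.
rewrite big_ord_recl /=; congr (_ + _).
under eq_bigr do rewrite IH mulr_sumr.
rewrite exchange_big; apply: eq_bigr => j _ /=; done.
Qed.

End Aux.
Section Main.
Variables (k : closedFieldType) (n : nat) (G : 'M[k]_n -> Prop) (X : 'cV[k]_n -> Prop).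

Definition colf (c : fld k n) (v : 'cV[k]_n) : 'cV[k]_n := \col_i (c i).@[coords v].

Definition eqv (c : fld k n) : Prop :=
  forall g v, G g -> colf c (g *m v) = g *m colf c v.

Lemma Df_eqv e c : eqv e -> eqv c -> eqv (Df e c).
Proof.
move=> he hc g v Gg; apply/matrixP => j z; rewrite (ord1 z) !mxE.
pose W := colf e v.
have eW i : (e i).@[coords (g *m v)] = coords (g *m W) i.
  by rewrite /coords -(he _ _ Gg) /colf mxE.
have key : Qp (coords (g *m v)) (coords (g *m W)) (c j) =
           \sum_l g j l *: Qp (coords v) (coords W) (c l).
  apply: poly_ext => s; rewrite Qp_horner horner_sum.
  rewrite (@meval_eq _ _ _ (coords (g *m (v + s *: W)))); last first.
    move=> i; rewrite /coords !mxE mulr_sumr -big_split; apply: eq_bigr => l _ /=.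
    by rewrite !mxE mulrDr mulrCA.
  have := congr1 (fun M : 'cV[k]_n => M j 0) (hc g (v + s *: W) Gg).
  rewrite /colf !mxE => ->; apply: eq_bigr => l _.
  rewrite hornerZ Qp_horner mxE; congr (_ * _); apply: meval_eq => i.
  by rewrite /coords !mxE.
have lhs : (D e (c j)).@[coords (g *m v)] =
   (Qp (coords (g *m v)) (coords (g *m W)) (c j))^`().[0].
  rewrite dir_deriv /D raddf_sum; apply: eq_bigr => i _ /=.
  by rewrite mevalM eW mulrC.
rewrite /Df lhs key raddf_sum horner_sum; apply: eq_bigr => l _ /=.
rewrite -mul_polyC derivM derivC mul0r add0r hornerCM dir_deriv /colf mxE /D.
rewrite raddf_sum; congr (_ * _).
apply: eq_bigr => i _ /=; by rewrite mevalM /coords /W /colf mxE.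
Qed.

Definition Iv q := vanishing_ideal X q.

Lemma Iv_add a b : Iv a -> Iv b -> Iv (a + b).
Proof. by move=> ha hb y Xy; rewrite mevalD ha ?hb ?addr0. Qed.
Lemma Iv_sub a b : Iv a -> Iv b -> Iv (a - b).
Proof. by move=> ha hb y Xy; rewrite mevalB ha ?hb ?subr0. Qed.
Lemma Iv_sum m (F : 'I_m -> {mpoly k[n]}) : (forall j, Iv (F j)) -> Iv (\sum_j F j).
Proof.
move=> h y Xy; rewrite raddf_sum big1 // => j _ /=; exact: h.
Qed.

Lemma main_ind (hD : forall e, eqv e -> forall q, Iv q -> Iv (D e q)) m :
  forall l, size l = m -> (forall j, (j < m)%N -> eqv (nth (@c0 k n) l j)) ->
  forall p, Iv p -> Iv (T l p).
Proof.
elim: m => [|m IH] [|e l] // hs hl p Ip.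
have -> : T (e :: l) p = D e (T l p) - R e l p by rewrite D_T addrK.
case: hs => hs.
have hl' j : (j < m)%N -> eqv (nth (@c0 k n) l j) by move=> jm; exact: (hl j.+1).
apply: Iv_sub; first by apply: hD; [exact: (hl 0%N) | exact: IH].
rewrite R_rep; apply: Iv_sum => j; apply: IH => //.
  by rewrite size_set_nth -hs; apply/maxn_idPr; exact: ltn_ord.
move=> i im; rewrite nth_set_nth /=; case: eqP => _; last exact: hl'.
apply: Df_eqv; first exact: (hl 0%N).
by apply: hl'; rewrite -hs ltn_ord.
Qed.

End Main.

Unset Implicit Arguments.

Theorem theorem4p2p2 (k : closedFieldType) (hchar : [pchar k] =i pred0)
  (n : nat) (G : 'M[k]_n -> Prop) (hG : closed_subgroup_GL G)
  (X : 'cV[k]_n -> Prop) (hX : zariski_closed X) :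
  G_symmetric G X <->
  (forall phi, G_equivariant G phi -> forall x, X x -> X (phi x)).
Proof.
split.
- move=> hsym phi [[P hP] heq] x Xx.
  have hD : forall e, eqv G e -> forall q, Iv X q -> Iv X (D e q).
    move=> e he q Iq y Xy.
    have hge : G_equivariant G (colf e).
      by split; [exists e => v i; rewrite /colf mxE | exact: he].
    have := hsym _ hge y Xy q Iq => h0.
    rewrite -[RHS]h0 /D raddf_sum; apply: eq_bigr => i _ /=.
    by rewrite mevalM /colf mxE mulrC.
  pose Psi : fld k n := fun i => P i - 'X_i.
  have cPsi v : colf Psi v = phi v - v.
    by apply/matrixP => i z; rewrite (ord1 z) !mxE mevalB mevalXU -hP.
  have ePsi : eqv G Psi.
    by move=> g v Gg; rewrite !cPsi heq // mulmxBr.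
  case: hX => S HS; apply/HS => p Sp.
  have Ip : Iv X p by move=> y Xy; exact: (proj1 (HS y) Xy p Sp).
  pose w := fun i => (Psi i).@[coords x].
  pose Q := Qp (coords x) w p.
  have Q1 : Q.[1] = p.@[coords (phi x)].
    rewrite Qp_horner; apply: meval_eq => i.
    by rewrite mul1r /w mevalB mevalXU /coords hP addrC subrK.
  suff Q0 : Q = 0 by rewrite -Q1 Q0 horner0.
  apply/polyP => m; rewrite coef0.
  have hm := main_ind hD (size_nseq m Psi)
      (fun j jm => ltac:(by rewrite nth_nseq jm)) Ip Xx.
  rewrite T_eval map_nseq in hm.
  have hd : (Q^`(m)).[0] = 0.
    rewrite /Q derivn_T Qp_horner -[RHS]hm; apply: meval_eq => i.
    by rewrite mul0r addr0.
  move: hd; rewrite horner_coef0 coef_derivn addn0 ffactnn -mulr_natr.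
  move/eqP; rewrite mulf_eq0 => /orP [/eqP //|].
  by rewrite (proj1 (pcharf0P _) hchar) -[m`! == 0%N]negbK -lt0n fact_gt0.
- move=> hst xi [[P hP] heq] x Xx p Ip.
  pose Q := Qp (coords x) (coords (xi x)) p.
  have Q0 : Q = 0.
    apply: poly_ext => t; rewrite horner0 Qp_horner.
    have hphi : G_equivariant G (fun v => v + t *: xi v).
      split.
        exists (fun i => 'X_i + t *: P i) => v i.
        by rewrite !mxE mevalD mevalXU mevalZ hP.
      by move=> g v Gg; rewrite heq // mulmxDr scalemxAr.
    have := Ip _ (hst _ hphi x Xx); rewrite /coords => <-.
    by apply: meval_eq => i; rewrite !mxE.
  have := dir_deriv (coords x) (coords (xi x)) p.
  rewrite -/Q Q0 deriv0 horner0 => /esym h0; rewrite -[RHS]h0.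
  by apply: eq_bigr => i _; rewrite mulrC.
Qed.
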